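(* Let $M=\langle n_1,n_2,n_3\rangle$ be a numerical monoid of embedding dimension three with minimal generators $n_1<n_2<n_3$. Then: (1) There exists $x\in M$ with $L(x+n_1)\neq L(x)+1$ if and only if $L(\alpha(M)n_2)\neq L(\alpha(M)n_2-n_1)+1$. (2) There exists $x\in M$ with $\ell(x+n_3)\neq \ell(x)+1$ if and only if $\ell(\beta(M)n_2)\neq \ell(\beta(M)n_2-n_3)+1$.
   Context: $\mathbb{N}$ denotes the nonnegative integers. A numerical monoid is a submonoid of $\mathbb{N}$ with finite complement. For $x\in M$, $\mathsf{Z}(x)=\{(a_1,a_2,a_3)\in\mathbb{N}^3\mid a_1n_1+a_2n_2+a_3n_3=x\}$; the length of a factorization is $a_1+a_2+a_3$; $L(x)$ and $\ell(x)$ are the maximum and minimum factorization lengths of $x$. Define $\alpha(M)=\min\{b\in\mathbb{N}\mid bn_2-n_1\in M\}$ and $\beta(M)=\min\{b\in\mathbb{N}\mid bn_2-n_3\in M\}$. *)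

(* Defs.v *)
From mathcomp Require Import all_boot.
Set Implicit Arguments. Unset Strict Implicit. Unset Printing Implicit Defensive.

Definition inM (n1 n2 n3 x : nat) : Prop :=
  exists a1 a2 a3, a1 * n1 + a2 * n2 + a3 * n3 = x.

(* Z(x) : all factorizations (a1,a2,a3) with a1 n1 + a2 n2 + a3 n3 = x.
   When n1,n2,n3 > 0 every coordinate of a factorization is <= x, so the
   enumeration below lists exactly the set Z(x). *)
Definition facts (n1 n2 n3 x : nat) : seq (nat * nat * nat) :=
  [seq f <- [seq (p, a3) | p <- [seq (a1, a2) | a1 <- iota 0 x.+1,
                                                  a2 <- iota 0 x.+1],
                           a3 <- iota 0 x.+1]
     | f.1.1 * n1 + f.1.2 * n2 + f.2 * n3 == x].

Definition flen (f : nat * nat * nat) : nat := f.1.1 + f.1.2 + f.2.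

Definition Lmax (n1 n2 n3 x : nat) : nat :=
  \max_(f <- facts n1 n2 n3 x) flen f.

(* l(x): minimum factorization length (the default x is an upper bound for
   all lengths when the generators are positive, and Z(x) is nonempty for x in M). *)
Definition lmin (n1 n2 n3 x : nat) : nat :=
  \big[minn/x]_(f <- facts n1 n2 n3 x) flen f.

Definition is_min_nat (P : nat -> Prop) (a : nat) : Prop :=
  P a /\ forall b, P b -> a <= b.

(* alpha(M) = min { b | b n2 - n1 in M }  (integer subtraction, so b n2 >= n1) *)
Definition alphaM (n1 n2 n3 a : nat) : Prop :=
  is_min_nat (fun b => n1 <= b * n2 /\ inM n1 n2 n3 (b * n2 - n1)) a.

Definition betaM (n1 n2 n3 a : nat) : Prop :=
  is_min_nat (fun b => n3 <= b * n2 /\ inM n1 n2 n3 (b * n2 - n3)) a.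

(* <n1,n2,n3> is a numerical monoid (finite complement in N) with minimal
   generating set {n1,n2,n3} of size three, n1 < n2 < n3. *)
Definition emb_dim3 (n1 n2 n3 : nat) : Prop :=
  [/\ 0 < n1, n1 < n2, n2 < n3 &
      exists F, forall x, F <= x -> inM n1 n2 n3 x] /\
  [/\ ~ (exists a b, a * n2 + b * n3 = n1),
      ~ (exists a b, a * n1 + b * n3 = n2)
    & ~ (exists a b, a * n1 + b * n2 = n3)].

(* Main.v *)
Require Import Defs.
From mathcomp Require Import all_boot zify.

Section S.
Variables (T : eqType) (F : T -> nat).

Lemma max_ub (s : seq T) x : x \in s -> F x <= \max_(i <- s) F i.
Proof.
elim: s => [//|y s IH]; rewrite inE big_cons => /orP [/eqP->|/IH H].
  exact: leq_maxl.
exact: (leq_trans H (leq_maxr _ _)).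
Qed.

Lemma max_ex (s : seq T) : s != [::] -> exists2 x, x \in s & F x = \max_(i <- s) F i.
Proof.
elim: s => [//|y s IH] _; rewrite big_cons.
case: s IH => [|z s] IH.
  by exists y; rewrite ?inE ?big_nil ?maxn0.
have [x xs Hx] := IH isT.
case: (leqP (F y) (\max_(i <- z :: s) F i)) => H.
  exists x; first by rewrite inE xs orbT.
  by rewrite -Hx in H *; lia.
by exists y; rewrite ?inE ?eqxx //; lia.
Qed.

Lemma min_lb (s : seq T) d x : x \in s -> \big[minn/d]_(i <- s) F i <= F x.
Proof.
elim: s => [//|y s IH]; rewrite inE big_cons => /orP [/eqP->|/IH H].
  exact: geq_minl.
exact: (leq_trans (geq_minr _ _) H).
Qed.

Lemma min_ex (s : seq T) d : \big[minn/d]_(i <- s) F i = d \/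
   exists2 x, x \in s & F x = \big[minn/d]_(i <- s) F i.
Proof.
elim: s => [|y s IH]; first by left; rewrite big_nil.
rewrite big_cons.
case: (leqP (F y) (\big[minn/d]_(i <- s) F i)) => H.
  right; exists y; rewrite ?inE ?eqxx //; lia.
case: IH => [->|[x xs Hx]]; [by left | right; exists x => //; rewrite inE xs orbT].
all: lia.
Qed.
End S.
Section F.
Variables n1 n2 n3 : nat.
Hypotheses (p1 : 0 < n1) (p2 : 0 < n2) (p3 : 0 < n3).

Lemma mem_facts y (a1 a2 a3 : nat) :
  ((a1, a2, a3) \in facts n1 n2 n3 y) = (a1 * n1 + a2 * n2 + a3 * n3 == y).
Proof.
rewrite /facts mem_filter [X in X && _]/=.
case E: (_ == y) => //.
move/eqP: E => E.
have h1 : a1 < y.+1 by nia.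
have h2 : a2 < y.+1 by nia.
have h3 : a3 < y.+1 by nia.
have Hm : (a1, a2, a3) \in [seq (p, a0) | p <- [seq (a0, a4) | a0 <- iota 0 y.+1, a4 <- iota 0 y.+1], a0 <- iota 0 y.+1].
  apply: (allpairs_f (fun p a => (p, a))); last by rewrite mem_iota.
  apply: (allpairs_f (fun a b => (a, b))); by rewrite mem_iota.
by rewrite Hm.
Qed.

Lemma L_ub y a1 a2 a3 : a1 * n1 + a2 * n2 + a3 * n3 = y ->
  a1 + a2 + a3 <= Lmax n1 n2 n3 y.
Proof.
move=> E; rewrite /Lmax.
have := @max_ub _ flen (facts n1 n2 n3 y) (a1, a2, a3).
by rewrite mem_facts E eqxx; apply.
Qed.

Lemma L_ex y : inM n1 n2 n3 y -> exists a1 a2 a3,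
  a1 * n1 + a2 * n2 + a3 * n3 = y /\ a1 + a2 + a3 = Lmax n1 n2 n3 y.
Proof.
case=> b1 [b2 [b3 E]].
have : facts n1 n2 n3 y != [::].
  apply/eqP => H; have := mem_facts y b1 b2 b3; rewrite H E eqxx //.
case/(@max_ex _ flen) => [[[a1 a2] a3]]; rewrite mem_facts => /eqP E1 E2.
by exists a1, a2, a3.
Qed.

Lemma l_lb y a1 a2 a3 : a1 * n1 + a2 * n2 + a3 * n3 = y ->
  lmin n1 n2 n3 y <= a1 + a2 + a3.
Proof.
move=> E; rewrite /lmin.
have := @min_lb _ flen (facts n1 n2 n3 y) y (a1, a2, a3).
by rewrite mem_facts E eqxx; apply.
Qed.

Lemma l_ex y : inM n1 n2 n3 y -> exists a1 a2 a3,
  a1 * n1 + a2 * n2 + a3 * n3 = y /\ a1 + a2 + a3 = lmin n1 n2 n3 y.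
Proof.
case=> b1 [b2 [b3 E]].
case: (@min_ex _ flen (facts n1 n2 n3 y) y) => [H|].
  exists b1, b2, b3; split => //.
  have le := @l_lb y b1 b2 b3 E; rewrite /lmin H in le *; nia.
case=> [[[a1 a2] a3]]; rewrite mem_facts => /eqP E1 E2.
by exists a1, a2, a3.
Qed.
End F.

Section P1.
Variables n1 n2 n3 : nat.
Hypotheses (p1 : 0 < n1) (l12 : n1 < n2) (l23 : n2 < n3).
Let p2 : 0 < n2. Proof. lia. Qed.
Let p3 : 0 < n3. Proof. lia. Qed.
Let Lub := @L_ub n1 n2 n3 p1 p2 p3.
Let Lex := @L_ex n1 n2 n3 p1 p2 p3.
Let llb := @l_lb n1 n2 n3 p1 p2 p3.
Let lex := @l_ex n1 n2 n3 p1 p2 p3.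
Notation L := (Lmax n1 n2 n3).
Notation l := (lmin n1 n2 n3).

Lemma Lgen x : inM n1 n2 n3 x -> L x + 1 <= L (x + n1).
Proof.
move=> /Lex [g1 [g2 [g3 [E <-]]]].
have : g1.+1 + g2 + g3 <= L (x + n1) by apply: Lub; nia.
lia.
Qed.

Lemma lgen x : inM n1 n2 n3 x -> l (x + n3) <= l x + 1.
Proof.
move=> /lex [g1 [g2 [g3 [E <-]]]].
have : l (x + n3) <= g1 + g2 + g3.+1 by apply: llb; nia.
lia.
Qed.

Lemma part1 a : alphaM n1 n2 n3 a ->
  L (a * n2) = L (a * n2 - n1) + 1 ->
  forall x, inM n1 n2 n3 x -> L (x + n1) = L x + 1.
Proof.
move=> [[Ha1 Ha2] Hmin] HL.
have [h1 [h2 [h3 [Eh Lh]]]] := Lex _ Ha2.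
have Ha : a <= L (a * n2).
  have : 0 + a + 0 <= L (a * n2) by apply: Lub; nia.
  lia.
elim/ltn_ind => x IH Mx.
apply/eqP; rewrite eqn_leq Lgen // andbT.
have Mx1 : inM n1 n2 n3 (x + n1).
  case: Mx => g1 [g2 [g3 E]]; exists g1.+1, g2, g3; nia.
have [f1 [f2 [f3 [Ef Lf]]]] := Lex _ Mx1.
rewrite -Lf.
case: f1 Ef Lf => [|k] Ef Lf.
  case: (leqP a f2) => Hf2.
    have : h1 + (f2 - a + h2) + (f3 + h3) <= L x.
      apply: Lub.
      move: Ef; have -> : f2 = a + (f2 - a) by lia.
      move: (f2 - a) => d Ef.
      rewrite addKn !mulnDl; rewrite !mulnDl in Ef. lia.
    lia.
  case: f3 Ef Lf => [|f3] Ef Lf.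
    have : a <= f2; last lia.
    apply: Hmin; split; first nia.
    by rewrite (_ : f2 * n2 - n1 = x) //; lia.
  case: Mx IH => g1 [g2 [g3 E]] IH.
  case: g3 E => [|g3] E.
    have : g1.+1 + g2 + 0 <= L (x + n1) by apply: Lub; nia.
    rewrite -Lf => Hle.
    have K1 : (f2 + f3.+1) * n2 < f2 * n2 + f3.+1 * n3 by nia.
    have K2 : g1.+1 * n1 + g2 * n2 <= (g1.+1 + g2) * n2 by nia.
    have K3 : (g1.+1 + g2) * n2 <= (f2 + f3.+1) * n2 by apply: leq_mul; lia.
    nia.
  have Mx' : inM n1 n2 n3 (x - n3) by exists g1, g2, g3; nia.
  have := IH (x - n3) (_ : x - n3 < x) Mx'.
  have : 0 + f2 + f3 <= L (x - n3 + n1) by apply: Lub; nia.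
  have [q1 [q2 [q3 [Eq <-]]]] := Lex _ Mx'.
  have : q1 + q2 + q3.+1 <= L x by apply: Lub; nia.
  nia.
have : k + f2 + f3 <= L x by apply: Lub; nia.
lia.
Qed.

Lemma part2 b : betaM n1 n2 n3 b ->
  l (b * n2) = l (b * n2 - n3) + 1 ->
  forall x, inM n1 n2 n3 x -> l (x + n3) = l x + 1.
Proof.
move=> [[Hb1 Hb2] Hmin] HL.
have [h1 [h2 [h3 [Eh Lh]]]] := lex _ Hb2.
have Hb : l (b * n2) <= b.
  have : l (b * n2) <= 0 + b + 0 by apply: llb; nia.
  lia.
elim/ltn_ind => x IH Mx.
apply/eqP; rewrite eqn_leq lgen //=.
have Mx1 : inM n1 n2 n3 (x + n3).
  case: Mx => g1 [g2 [g3 E]]; exists g1, g2, g3.+1; nia.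
have [f1 [f2 [f3 [Ef Lf]]]] := lex _ Mx1.
rewrite -Lf.
case: f3 Ef Lf => [|k] Ef Lf.
  case: (leqP b f2) => Hf2.
    have : l x <= (f1 + h1) + (f2 - b + h2) + h3.
      apply: llb.
      move: Ef; have -> : f2 = b + (f2 - b) by lia.
      move: (f2 - b) => d Ef.
      rewrite addKn !mulnDl; rewrite !mulnDl in Ef; lia.
    lia.
  case: f1 Ef Lf => [|f1] Ef Lf.
    have : b <= f2; last lia.
    apply: Hmin; split; first nia.
    by rewrite (_ : f2 * n2 - n3 = x) //; lia.
  case: Mx IH => g1 [g2 [g3 E]] IH.
  case: g1 E => [|g1] E.
    have : l (x + n3) <= 0 + g2 + g3.+1 by apply: llb; nia.
    rewrite -Lf => Hle.
    have K1 : f1.+1 * n1 + f2 * n2 < (f1.+1 + f2) * n2 by nia.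
    have K2 : (g2 + g3.+1) * n2 <= g2 * n2 + g3.+1 * n3 by nia.
    have K3 : (f1.+1 + f2) * n2 <= (g2 + g3.+1) * n2 by apply: leq_mul; lia.
    nia.
  have Mx' : inM n1 n2 n3 (x - n1) by exists g1, g2, g3; nia.
  have := IH (x - n1) (_ : x - n1 < x) Mx'.
  have : l (x - n1 + n3) <= f1 + f2 + 0 by apply: llb; nia.
  have [q1 [q2 [q3 [Eq <-]]]] := lex _ Mx'.
  have : l x <= q1.+1 + q2 + q3 by apply: llb; nia.
  nia.
have : l x <= f1 + f2 + k by apply: llb; nia.
lia.
Qed.
End P1.

Theorem mainTheorem5 (n1 n2 n3 a b : nat) :
  emb_dim3 n1 n2 n3 -> alphaM n1 n2 n3 a -> betaM n1 n2 n3 b ->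
  ((exists x, inM n1 n2 n3 x /\
      Lmax n1 n2 n3 (x + n1) <> Lmax n1 n2 n3 x + 1)
   <-> Lmax n1 n2 n3 (a * n2) <> Lmax n1 n2 n3 (a * n2 - n1) + 1)
  /\
  ((exists x, inM n1 n2 n3 x /\
      lmin n1 n2 n3 (x + n3) <> lmin n1 n2 n3 x + 1)
   <-> lmin n1 n2 n3 (b * n2) <> lmin n1 n2 n3 (b * n2 - n3) + 1).
Proof.
move=> [[p1 l12 l23 _] _] Ha Hb.
split; split.
- move=> [x [Mx Hx]] E; apply: Hx; exact: (@part1 n1 n2 n3 p1 l12 l23 a Ha E x Mx).
- move=> H; exists (a * n2 - n1); split; first by case: Ha => [[]].
  by case: Ha => [[Ha1 _] _]; rewrite subnK.
- move=> [x [Mx Hx]] E; apply: Hx; exact: (@part2 n1 n2 n3 p1 l12 l23 b Hb E x Mx).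
- move=> H; exists (b * n2 - n3); split; first by case: Hb => [[]].
  by case: Hb => [[Hb1 _] _]; rewrite subnK.
Qed.
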